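(* For every tournament $T$, $\Delta(T)\le 2\,\mathrm{ctw}(T)$.
   Context: A tournament is a digraph with exactly one arc between each pair of distinct vertices. For an ordering $\sigma=\langle v_1,\dots,v_n\rangle$ of $V(T)$, an arc $(v_i,v_j)$ is backward if $j<i$; $d_\sigma(v)$ is the number of backward arcs incident to $v$, $\Delta_\sigma(T)=\max_v d_\sigma(v)$, and the degreewidth is $\Delta(T)=\min_\sigma\Delta_\sigma(T)$. For each prefix $\langle v_1,\dots,v_k\rangle$ ($k\in[n]$), its cut is the set of backward arcs with head in the prefix and tail outside it; the width of $\sigma$ is the maximum size of such a cut over all prefixes, and the cutwidth $\mathrm{ctw}(T)$ is the minimum width over all orderings of $V(T)$. *)

(* Defs.v *)
From mathcomp Require Import all_boot.
Set Implicit Arguments. Unset Strict Implicit. Unset Printing Implicit Defensive.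

Section Tournaments.
Variables (V : finType) (E : rel V).

(* E u v means there is an arc (u,v) with tail u and head v. *)
Definition is_tournament : Prop :=
  (forall v, ~~ E v v) /\
  (forall u v, u != v -> E u v = ~~ E v u).

(* An ordering <v_1,...,v_n> is encoded by the (bijective) position map
   s : V -> 'I_#|V|; s v is the index of v (0-based). *)
Definition ordering (s : {ffun V -> 'I_#|V|}) : bool := injectiveb s.

Definition bdeg (s : {ffun V -> 'I_#|V|}) (v : V) : nat :=
  #|[set u | (E u v && (s v < s u)) || (E v u && (s u < s v))]|.

Definition Delta_ord (s : {ffun V -> 'I_#|V|}) : nat := \max_(v : V) bdeg s v.

Definition cut (s : {ffun V -> 'I_#|V|}) (k : nat) : nat :=
  #|[set p : V * V | E p.1 p.2 && (s p.2 < k <= s p.1)]|.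

Definition width (s : {ffun V -> 'I_#|V|}) : nat :=
  \max_(k < #|V|) cut s k.+1.

Lemma ordering_exists : exists s, ordering s.
Proof.
exists [ffun v => enum_rank v]; apply/injectiveP => x y.
by rewrite !ffunE => /enum_rank_inj.
Qed.

Lemma degreewidth_ex :
  exists k, [exists s, ordering s && (Delta_ord s == k)].
Proof.
have [s hs] := ordering_exists.
by exists (Delta_ord s); apply/existsP; exists s; rewrite hs eqxx.
Qed.

Lemma cutwidth_ex :
  exists k, [exists s, ordering s && (width s == k)].
Proof.
have [s hs] := ordering_exists.
by exists (width s); apply/existsP; exists s; rewrite hs eqxx.
Qed.

Definition degreewidth : nat := ex_minn degreewidth_ex.
Definition cutwidth : nat := ex_minn cutwidth_ex.

End Tournaments.

(* Main.v *)
Require Import Defs.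
From mathcomp Require Import all_boot.
From mathcomp Require Import zify.

Lemma cut_le_width {V : finType} (E : rel V) s k : cut E s k <= width E s.
Proof.
case: k => [|k].
  have -> : cut E s 0 = 0.
    apply/eqP; rewrite cards_eq0; apply/eqP/setP => p; by rewrite !inE ltn0 andbF.
  by [].
case: (ltnP k #|V|) => hk.
  exact: (@leq_bigmax _ (fun i : 'I_#|V| => cut E s i.+1) (Ordinal hk)).
have -> : cut E s k.+1 = 0.
  apply/eqP; rewrite cards_eq0; apply/eqP/setP => p; rewrite !inE.
  apply/negbTE/negP => /andP[_ /andP[_ h]].
  have := ltn_ord (s p.1); lia.
by [].
Qed.

Lemma bdeg_le {V : finType} (E : rel V) s v : bdeg E s v <= 2 * width E s.
Proof.
rewrite /bdeg.
set A := [set u | E u v && (s v < s u)].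
set B := [set u | E v u && (s u < s v)].
have -> : [set u | (E u v && (s v < s u)) || (E v u && (s u < s v))] = A :|: B.
  by apply/setP => u; rewrite !inE.
apply: leq_trans (leq_card_setU A B) _.
rewrite mul2n -addnn; apply: leq_add.
  apply: (leq_trans _ (cut_le_width E s (s v).+1)).
  rewrite -(@card_imset _ _ (fun u => (u, v)) A); last by move=> x y [].
  apply: subset_leq_card; apply/subsetP => p /imsetP[u uA ->].
  move: uA; rewrite !inE /= => /andP[h1 h2]; by rewrite h1 ltnSn h2.
apply: (leq_trans _ (cut_le_width E s (s v))).
rewrite -(@card_imset _ _ (fun u => (v, u)) B); last by move=> x y [].
apply: subset_leq_card; apply/subsetP => p /imsetP[u uB ->].
move: uB; rewrite !inE /= => /andP[h1 h2]; by rewrite h1 h2 leqnn.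
Qed.

Theorem mainTheorem20 (V : finType) (E : rel V) :
  is_tournament E -> degreewidth E <= 2 * cutwidth E.
Proof.
move=> _.
rewrite /degreewidth; case: ex_minnP => d _ hmin.
rewrite /cutwidth; case: ex_minnP => m /existsP[s /andP[os /eqP ws]] _.
apply: leq_trans (hmin (Delta_ord E s) _) _.
  by apply/existsP; exists s; rewrite os eqxx.
rewrite -ws; apply/bigmax_leqP => v _; exact: bdeg_le.
Qed.
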